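(* (Sufficient condition for negative transfer.) Let $\eta_i\ge0$ with $\sum\eta_i<\infty$, let $N_A,N_B>0$ be arbitrary, and suppose $E_B:=\sum_iE_{B,i}>0$. If $\rho<\sqrt{\gamma_A}/(1+\sqrt{\gamma_A})$, then \[ E_{A\to B}(\rho):=\sum_i\Big[2(1-\rho)(1-q_{A,i})+\frac{q_{A,i}^2}{1-\gamma_A}\Big]E_{B,i}\;>\;E_B . \] Indeed each mode satisfies $2(1-\rho)(1-q)+q^2/(1-\gamma_A)>1$ for all real $q$ under this condition.
   Context: For sample size $N$: $\kappa>0$ solves $1=\sum_i\eta_i/(\kappa+N\eta_i)$, $\gamma=\sum_iN\eta_i^2/(\kappa+N\eta_i)^2$, $q_i=\kappa/(\kappa+N\eta_i)$; subscripts $A,B$ denote $N=N_A,N_B$. $E_{B,i}=q_{B,i}^2\eta_i^2/(1-\gamma_B)$. $E_{A\to B}(\rho)$ is the (replica-method) generalization error on task B after sequential training A→B with target similarity $\rho$, and $E_B$ the single-task error on B. *)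

(* Defs.v *)
From Stdlib Require Import Reals.
From Coquelicot Require Import Coquelicot.
Open Scope R_scope.

Definition kappa_eq (eta : nat -> R) (N kappa : R) : Prop :=
  0 < kappa /\ is_series (fun i => eta i / (kappa + N * eta i)) 1.

Definition gammaN (eta : nat -> R) (N kappa : R) : R :=
  Series (fun i => N * (eta i)^2 / (kappa + N * eta i)^2).

Definition qN (eta : nat -> R) (N kappa : R) (i : nat) : R :=
  kappa / (kappa + N * eta i).

Definition EBi (eta : nat -> R) (NB kB : R) (i : nat) : R :=
  (qN eta NB kB i)^2 * (eta i)^2 / (1 - gammaN eta NB kB).

Definition mode_factor (rho gA q : R) : R :=
  2 * (1 - rho) * (1 - q) + q^2 / (1 - gA).

Definition EAtoB (eta : nat -> R) (NA kA NB kB rho : R) : R :=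
  Series (fun i => mode_factor rho (gammaN eta NA kA) (qN eta NA kA i)
                   * EBi eta NB kB i).

(* Main.v *)
Require Import Defs.
From Stdlib Require Import Reals Lra Psatz Classical.
From Coquelicot Require Import Coquelicot.
Open Scope R_scope.

Lemma rho_bound (g rho : R) : 0 <= g < 1 ->
  rho < sqrt g / (1 + sqrt g) -> rho * (1 + sqrt g) < sqrt g.
Proof. intros Hg H. pose proof (sqrt_pos g).
  apply (Rmult_lt_compat_r (1 + sqrt g)) in H; [|lra].
  unfold Rdiv in H. rewrite Rmult_assoc, Rinv_l in H; lra. Qed.

Lemma mode_gt (rho g q : R) : 0 <= g < 1 -> 0 <= rho ->
  rho < sqrt g / (1 + sqrt g) -> mode_factor rho g q > 1.
Proof.
  intros Hg Hr H. pose proof (rho_bound g rho Hg H) as H1.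
  set (s := sqrt g) in *. assert (Hs : s * s = g) by (apply sqrt_sqrt; lra).
  assert (0 <= s) by apply sqrt_pos.
  unfold mode_factor.
  assert (Hk : (1 - g) * (2 * (1 - rho) * (1 - q) + q ^ 2 / (1 - g) - 1)
    = (q - (1-rho)*(1-g))^2 + (1-g)*(((1-rho)*s - rho)*((1-rho)*s+rho))).
  { rewrite <- Hs. field. rewrite Hs. lra. }
  assert (0 < (1-g)*(((1-rho)*s - rho)*((1-rho)*s+rho))).
  { apply Rmult_lt_0_compat; [lra|]. assert (rho < 1) by nra. assert (0 < (1-rho)*s - rho) by nra. assert (0 <= (1-rho)*s) by (apply Rmult_le_pos; lra). apply Rmult_lt_0_compat; lra. }
  assert (0 < (1 - g) * (2 * (1 - rho) * (1 - q) + q ^ 2 / (1 - g) - 1)).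
  { rewrite Hk. pose proof (pow2_ge_0 (q - (1-rho)*(1-g))). lra. }
  assert (0 < 2 * (1 - rho) * (1 - q) + q ^ 2 / (1 - g) - 1).
  { apply (Rmult_lt_reg_l (1-g)); lra. }
  lra.
Qed.

Lemma mode_ge (rho g q : R) : 0 <= g < 1 -> 0 <= q <= 1 ->
  rho < sqrt g / (1 + sqrt g) -> mode_factor rho g q >= 1 /\ (q < 1 -> mode_factor rho g q > 1).
Proof.
  intros Hg Hq H. destruct (Rle_or_lt 0 rho) as [Hr|Hr].
  { pose proof (mode_gt rho g q Hg Hr H). lra. }
  assert (Hi : q^2 <= q ^ 2 / (1 - g)).
  { unfold Rdiv. rewrite <- (Rmult_1_r (q^2)) at 1. apply Rmult_le_compat_l; [nra|].
    rewrite <- Rinv_1. apply Rinv_le_contravar; lra. }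
  unfold mode_factor. split.
  - nra.
  - intro. nra.
Qed.

Lemma Series_zero : Series (fun _ => 0) = 0.
Proof. transitivity (Series (fun n => 0 * (fun _ => 0) n)). { apply Series_ext. intros; ring. }
 rewrite Series_scal_l. ring. Qed.

Lemma Series_nonneg (c : nat -> R) : (forall n, 0 <= c n) -> ex_series c -> 0 <= Series c.
Proof. intros H E. rewrite <- Series_zero. apply Series_le; auto. intros; split; [lra|auto]. Qed.

Lemma sum_ge (c : nat -> R) i : (forall n, 0 <= c n) -> c i <= sum_f_R0 c i.
Proof. intros H. destruct i; simpl; [lra|]. pose proof (cond_pos_sum c i H). lra. Qed.

Lemma Series_pos (c : nat -> R) i : (forall n, 0 <= c n) -> ex_series c -> 0 < c i -> 0 < Series c.
Proof.
  intros H E Hi. rewrite (Series_incr_n c (S i)); [|lia|auto]. simpl Init.Nat.pred.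
  pose proof (sum_ge c i H).
  assert (0 <= Series (fun k => c (S i + k)%nat)).
  { apply Series_nonneg; auto. apply (ex_series_incr_n c (S i)). auto. }
  lra.
Qed.

Lemma ex_series_le_R (a b : nat -> R) : (forall n, 0 <= a n <= b n) -> ex_series b -> ex_series a.
Proof. intros H E. apply (ex_series_le a b); auto. intro n. unfold norm; simpl. unfold abs; simpl.
  rewrite Rabs_pos_eq; apply H. Qed.

Lemma ex_series_scal_R (c : R) (a : nat -> R) : ex_series a -> ex_series (fun n => c * a n).
Proof. intro E. exact (ex_series_scal_l c a E). Qed.

Lemma gamma_facts eta N k : (forall i, 0 <= eta i) -> 0 < N -> kappa_eq eta N k ->
  0 <= gammaN eta N k < 1 /\ ex_series (fun i => N * (eta i)^2 / (k + N * eta i)^2).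
Proof.
  intros He HN [Hk Hs].
  set (a := fun i => eta i / (k + N * eta i)).
  set (b := fun i => N * (eta i)^2 / (k + N * eta i)^2).
  assert (HD : forall i, 0 < k + N * eta i) by (intro i; pose proof (He i); nra).
  assert (Hab : forall i, 0 <= b i <= a i).
  { intro i. pose proof (HD i). pose proof (He i). unfold a, b. split.
    - apply Rmult_le_pos; [nra|]. apply Rlt_le, Rinv_0_lt_compat; nra.
    - assert (a i - b i = eta i * k / (k + N * eta i)^2) by (unfold a,b; field; lra).
      unfold a, b in H1. assert (0 <= eta i * k / (k + N * eta i)^2).
      { apply Rmult_le_pos; [nra|]. apply Rlt_le, Rinv_0_lt_compat; nra. } lra. }
  assert (Ea : ex_series a) by (exists 1; exact Hs).
  assert (Eb : ex_series b) by (apply (ex_series_le_R b a); auto).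
  split; [|exact Eb]. unfold gammaN. fold b. split.
  - apply Series_nonneg; auto. apply Hab.
  - assert (Sa : Series a = 1) by (apply is_series_unique; exact Hs).
    destruct (classic (exists i, 0 < eta i)) as [[i Hi]|Hn].
    + assert (0 < Series (fun n => a n - b n)).
      { apply (Series_pos _ i).
        - intro n; pose proof (Hab n); lra.
        - apply (ex_series_minus a b); auto.
        - assert (a i - b i = eta i * k / (k + N * eta i)^2) by (unfold a,b; field; pose proof (HD i); lra).
          rewrite H. pose proof (HD i). apply Rmult_lt_0_compat; [nra|]. apply Rinv_0_lt_compat; nra. }
      rewrite Series_minus in H; auto. lra.
    + exfalso. assert (Series a = 0).
      { rewrite <- Series_zero. apply Series_ext. intro n. unfold a.
        assert (eta n = 0). { pose proof (He n). destruct (Req_dec (eta n) 0); auto. exfalso. apply Hn. exists n. lra. }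
        rewrite H. unfold Rdiv. ring. }
      lra.
Qed.

Theorem mainTheorem5 (eta : nat -> R) (NA NB kA kB rho : R) :
  (forall i, 0 <= eta i) ->
  ex_series eta ->
  0 < NA -> 0 < NB ->
  kappa_eq eta NA kA ->
  kappa_eq eta NB kB ->
  0 < Series (EBi eta NB kB) ->
  rho < sqrt (gammaN eta NA kA) / (1 + sqrt (gammaN eta NA kA)) ->
  ex_series (fun i => mode_factor rho (gammaN eta NA kA) (qN eta NA kA i)
                      * EBi eta NB kB i)
  /\ EAtoB eta NA kA NB kB rho > Series (EBi eta NB kB)
  /\ (0 <= rho -> forall q : R, mode_factor rho (gammaN eta NA kA) q > 1).
Proof.
  intros He _ HNA HNB KA KB HS Hr.
  destruct (gamma_facts eta NA kA He HNA KA) as [GA _].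
  destruct (gamma_facts eta NB kB He HNB KB) as [GB EbB].
  pose proof KA as [HkA _]. pose proof KB as [HkB _].
  set (gA := gammaN eta NA kA) in *. set (gB := gammaN eta NB kB) in *.
  assert (Hq : forall i, 0 <= qN eta NA kA i <= 1 /\ (0 < eta i -> qN eta NA kA i < 1)).
  { intro i. pose proof (He i). unfold qN.
    assert (0 < kA + NA * eta i) by nra. split; [split|].
    - apply Rmult_le_pos; [lra|]. apply Rlt_le, Rinv_0_lt_compat; lra.
    - apply (Rmult_le_reg_r (kA + NA * eta i)); [lra|]. unfold Rdiv.
      rewrite Rmult_assoc, Rinv_l; nra.
    - intro. apply (Rmult_lt_reg_r (kA + NA * eta i)); [lra|]. unfold Rdiv.
      rewrite Rmult_assoc, Rinv_l; nra. }
  assert (HE : forall i, EBi eta NB kB i = (kB^2 / NB / (1 - gB)) * (NB * (eta i)^2 / (kB + NB * eta i)^2)).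
  { intro i. pose proof (He i). unfold EBi, qN. fold gB. field. split; [|split]; nra. }
  assert (HE0 : forall i, 0 <= EBi eta NB kB i).
  { intro i. rewrite HE. pose proof (He i). apply Rmult_le_pos.
    - unfold Rdiv. apply Rmult_le_pos; [apply Rmult_le_pos|]; [nra| |].
      + apply Rlt_le, Rinv_0_lt_compat; lra.
      + apply Rlt_le, Rinv_0_lt_compat; lra.
    - apply Rmult_le_pos; [nra|]. apply Rlt_le, Rinv_0_lt_compat. assert (0 < kB + NB * eta i) by nra. apply pow_lt; lra. }
  assert (EE : ex_series (EBi eta NB kB)).
  { apply (ex_series_ext (fun i => (kB^2 / NB / (1 - gB)) * (NB * (eta i)^2 / (kB + NB * eta i)^2))).
    - intro; symmetry; apply HE.
    - apply ex_series_scal_R. exact EbB. }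
  assert (HE1 : forall i, 0 < EBi eta NB kB i -> 0 < eta i).
  { intros i Hi. pose proof (He i). destruct (Req_dec (eta i) 0) as [Z|Z]; [|lra].
    exfalso. rewrite HE, Z in Hi. unfold Rdiv in Hi. rewrite pow_i in Hi by lia. lra. }
  set (f := fun i => mode_factor rho gA (qN eta NA kA i)).
  assert (Hf : forall i, f i >= 1 /\ (0 < eta i -> f i > 1)).
  { intro i. destruct (Hq i) as [Hq1 Hq2].
    destruct (mode_ge rho gA (qN eta NA kA i) GA Hq1 Hr) as [A1 A2].
    split; auto. }
  set (M := 2 * Rabs (1 - rho) + / (1 - gA)).
  assert (Hfb : forall i, f i <= M).
  { intro i. destruct (Hq i) as [[Hq1 Hq3] _]. unfold f, mode_factor, M.
    assert (2 * (1 - rho) * (1 - qN eta NA kA i) <= 2 * Rabs (1 - rho)).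
    { pose proof (Rle_abs (1 - rho)). pose proof (Rabs_pos (1-rho)). nra. }
    assert (qN eta NA kA i ^ 2 / (1 - gA) <= / (1 - gA)).
    { unfold Rdiv. rewrite <- (Rmult_1_l (/ (1 - gA))) at 2. apply Rmult_le_compat_r.
      - apply Rlt_le, Rinv_0_lt_compat; lra.
      - nra. }
    lra. }
  assert (EF : ex_series (fun i => f i * EBi eta NB kB i)).
  { apply (ex_series_le_R _ (fun i => M * EBi eta NB kB i)).
    - intro i. pose proof (Hf i) as [H1 _]. pose proof (Hfb i). pose proof (HE0 i). split; nra.
    - apply ex_series_scal_R; auto. }
  split; [exact EF|split].
  - change (Series (fun i => f i * EBi eta NB kB i) > Series (EBi eta NB kB)).
    destruct (classic (exists i, 0 < EBi eta NB kB i)) as [[i Hi]|Hn].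
    + assert (0 < Series (fun n => f n * EBi eta NB kB n - EBi eta NB kB n)).
      { apply (Series_pos _ i).
        - intro n. pose proof (Hf n) as [H1 _]. pose proof (HE0 n). nra.
        - apply (ex_series_minus (fun n => f n * EBi eta NB kB n) (EBi eta NB kB)); auto.
        - pose proof (Hf i) as [_ H2]. specialize (H2 (HE1 i Hi)). nra. }
      rewrite Series_minus in H; auto. lra.
    + exfalso. assert (Series (EBi eta NB kB) = 0).
      { rewrite <- Series_zero. apply Series_ext. intro n. pose proof (HE0 n).
        destruct (Req_dec (EBi eta NB kB n) 0); auto. exfalso. apply Hn. exists n. lra. }
      lra.
  - intros H0 q. apply mode_gt; auto.
Qed.
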